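(* Let $(\Gamma,\lambda)$ be a tree plan. There is a function $N_\Gamma:\omega\to\omega$ such that for every $k<\omega$ and every finite set $X$ with $|X|\ge N_\Gamma(k)$, the second player (Duplicator) has a winning strategy in the $k$-round Ehrenfeucht–Fraïssé game played on the $\mathcal{L}_\Gamma$-structures $\Gamma(X)$ and $\Gamma(\omega)$. (One may take $N_\Gamma(k)=k+\ell(\Gamma)\cdot\mathsf{h}(\Gamma)$.)
   Context: Tree plans: a tree plan is a pair $(\Gamma,\lambda)$ where $\Gamma\subseteq\omega^{<\omega}$ is a finite set of finite sequences containing the empty sequence $\langle\rangle$ and closed under initial segments, and $\lambda:\Gamma\to\{1,\infty\}$ with $\lambda(\langle\rangle)=1$. For a non-empty set $X$ (and a fixed symbol $\star\notin X$), $\Gamma(X)$ is the set of finite sequences $\langle(i_0,t_0),\dots,(i_n,t_n)\rangle$ (including the empty one) such that $\langle i_0,\dots,i_n\rangle\in\Gamma$ and for each $k\le n$: $t_k=\star$ if $\lambda(\langle i_0,\dots,i_k\rangle)=1$, and $t_k\in X$ if $\lambda(\langle i_0,\dots,i_k\rangle)=\infty$. It is a tree under the initial-segment order, viewed as a structure in the language $\mathcal{L}_t$ with $\le$, root constant $\varepsilon$ (the empty sequence), meet $\sqcap$ (longest common initial segment) and $\mathtt{pred}$ (delete the last entry; $\mathtt{pred}(\varepsilon)=\varepsilon$). The map $\pi_X:\Gamma(X)\to\Gamma$ sends $\langle(i_0,t_0),\dots,(i_n,t_n)\rangle$ to $\langle i_0,\dots,i_n\rangle$; $\Gamma(\omega)$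 is $\Gamma(X)$ for $X=\omega$. The language $\mathcal{L}_\Gamma$ is $\mathcal{L}_t$ together with unary predicates $P_\sigma$ ($\sigma\in\Gamma$), interpreted by $P_\sigma=\pi_X^{-1}(\sigma)$. $\ell(\Gamma)$ is $1$ plus the maximum over $\sigma\in\Gamma$ of the number of $i\in\omega$ with $\sigma^\frown i\in\Gamma$ and $\lambda(\sigma^\frown i)=1$; $\mathsf{h}(\Gamma)$ is the maximum length of a sequence in $\Gamma$. *)

(* Defs.v *)
From mathcomp Require Import all_boot.
Set Implicit Arguments. Unset Strict Implicit. Unset Printing Implicit Defensive.

(* A tree plan: a finite set G of finite sequences of naturals (given as a
   list), with labelling lam : seq nat -> bool, where [lam s = true] encodes
   lambda(s) = infinity and [lam s = false] encodes lambda(s) = 1. *)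
Definition tree_plan (G : seq (seq nat)) (lam : seq nat -> bool) : Prop :=
  [::] \in G /\
  (forall s n, s \in G -> take n s \in G) /\
  lam [::] = false.

(* Elements of Gamma(X): sequences of pairs (i_k, t_k); the symbol star is
   [None], and t_k in X is [Some x]. *)
Definition elt (T : Type) := seq (nat * option T).

Definition proj (T : Type) (s : elt T) : seq nat := map fst s.

Definition in_GammaX (G : seq (seq nat)) (lam : seq nat -> bool)
    (T : eqType) (s : elt T) : bool :=
  (proj s \in G) &&
  all (fun k => lam (take k.+1 (proj s)) == isSome (nth (0, None) s k).2)
      (iota 0 (size s)).

Fixpoint lcp (T : eqType) (s t : seq T) : seq T :=
  match s, t with
  | x :: s', y :: t' => if x == y then x :: lcp s' t' else [::]
  | _, _ => [::]
  end.

Definition tpred (T : Type) (s : seq T) : seq T := take (size s).-1 s.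

Inductive term : Type :=
  | TVar of nat
  | TEps
  | TMeet of term & term
  | TPred of term.

Inductive atom : Type :=
  | AEq of term & term
  | ALe of term & term
  | AP of seq nat & term.

Fixpoint eval_term (T : eqType) (env : seq (elt T)) (t : term) : elt T :=
  match t with
  | TVar i => nth [::] env i
  | TEps => [::]
  | TMeet u v => lcp (eval_term env u) (eval_term env v)
  | TPred u => tpred (eval_term env u)
  end.

Definition holds_atom (T : eqType) (env : seq (elt T)) (a : atom) : bool :=
  match a with
  | AEq u v => eval_term env u == eval_term env v
  | ALe u v => prefix (eval_term env u) (eval_term env v)
  | AP sigma u => proj (eval_term env u) == sigma
  end.

Definition atom_ok (G : seq (seq nat)) (a : atom) : bool :=
  match a with
  | AP sigma _ => sigma \in G
  | _ => true
  end.

Definition partial_iso (G : seq (seq nat)) (A B : eqType)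
    (as_ : seq (elt A)) (bs : seq (elt B)) : Prop :=
  size as_ = size bs /\
  forall a, atom_ok G a -> holds_atom as_ a = holds_atom bs a.

Fixpoint dup_wins (G : seq (seq nat)) (lam : seq nat -> bool) (A B : eqType)
    (k : nat) (as_ : seq (elt A)) (bs : seq (elt B)) : Prop :=
  match k with
  | 0 => partial_iso G as_ bs
  | k'.+1 =>
      (forall a, in_GammaX G lam a ->
         exists2 b, in_GammaX G lam b & dup_wins G lam k' (rcons as_ a) (rcons bs b)) /\
      (forall b, in_GammaX G lam b ->
         exists2 a, in_GammaX G lam a & dup_wins G lam k' (rcons as_ a) (rcons bs b))
  end.

Definition EF_dup_wins (G : seq (seq nat)) (lam : seq nat -> bool)
    (A B : eqType) (k : nat) : Prop :=
  @dup_wins G lam A B k [::] [::].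

(* Main.v *)
Require Import Defs.
From mathcomp Require Import all_boot.
Set Implicit Arguments. Unset Strict Implicit. Unset Printing Implicit Defensive.

Section Lcp.
Variable T : eqType.
Implicit Types s t u v : seq T.

Lemma lcps0 s : lcp s [::] = [::]. Proof. by case: s. Qed.

Lemma lcpss s : lcp s s = s.
Proof. by elim: s => //= x s ->; rewrite eqxx. Qed.

Lemma lcpC s t : lcp s t = lcp t s.
Proof.
elim: s t => [|x s IH] [|y t] //=.
by have [->|ne] := eqVneq x y; rewrite ?IH.
Qed.

Lemma lcpP n s t : (n <= size (lcp s t)) = [&& n <= size s, n <= size t & take n s == take n t].
Proof.
elim: s n t => [|x s IH] [|n] [|y t] //=; rewrite ?andbF //.
rewrite !ltnS eqseq_cons; have [->|ne] := eqVneq x y => /=; first exact: IH.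
by rewrite !andbF.
Qed.

Lemma take_lcp n m s t : lcp (take n s) (take m t) = take (minn (minn n m) (size (lcp s t))) s.
Proof.
elim: s n m t => [|x s IH] [|n] [|m] [|y t] //=; rewrite ?min0n ?minn0 ?lcps0 //.
by have [->|ne] := eqVneq x y => //=; rewrite !minnSS /= IH.
Qed.

Lemma prefix_lcp u v : prefix u v = (size (lcp u v) == size u).
Proof.
elim: u v => [|x u IH] [|y v] //=.
by have [->|ne] := eqVneq x y => /=.
Qed.

Lemma eq_lcp u v : (u == v) = (size (lcp u v) == size u) && (size (lcp u v) == size v).
Proof.
elim: u v => [|x u IH] [|y v] //=.
by rewrite eqseq_cons; have [->|ne] := eqVneq x y => /=.
Qed.
End Lcp.

Definition ipat (T : Type) (s : elt T) : seq (nat * bool) :=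
  map (fun p => (p.1, isSome p.2)) s.

Lemma proj_ipat (T : Type) (s : elt T) : proj s = map fst (ipat s).
Proof. by rewrite /proj /ipat -map_comp. Qed.

Lemma size_ipat (T : Type) (s : elt T) : size (ipat s) = size s.
Proof. exact: size_map. Qed.

Lemma nth_ipat (T : Type) (s : elt T) k :
  nth (0, false) (ipat s) k = ((nth (0, None) s k).1, isSome (nth (0, None) s k).2).
Proof. by elim: s k => [|p s IH] [|k] //=. Qed.

Lemma in_GammaX_E G lam (T : eqType) (s : elt T) :
  in_GammaX G lam s = (map fst (ipat s) \in G) &&
    all (fun k => lam (take k.+1 (map fst (ipat s))) == (nth (0, false) (ipat s) k).2)
        (iota 0 (size (ipat s))).
Proof.
rewrite /in_GammaX proj_ipat size_ipat; congr (_ && _).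
by apply: eq_all => k; rewrite nth_ipat.
Qed.

Lemma in_GammaX_ipat G lam (A B : eqType) (s : elt A) (u : elt B) :
  ipat s = ipat u -> in_GammaX G lam s = in_GammaX G lam u.
Proof. by move=> H; rewrite !in_GammaX_E H. Qed.

Definition D (T : eqType) (env : seq (elt T)) i j :=
  size (lcp (nth [::] env i) (nth [::] env j)).

Definition Inv (A B : eqType) (xs : seq (elt A)) (ys : seq (elt B)) :=
  size xs = size ys /\ (forall i, ipat (nth [::] xs i) = ipat (nth [::] ys i)) /\
  (forall i j, D xs i j = D ys i j).

Lemma Inv_sym A B xs ys : @Inv A B xs ys -> Inv ys xs.
Proof. by case=> [H1 [H2 H3]]; split; [|split] => *. Qed.

Fixpoint sidx (Df : nat -> nat -> nat) (t : term) : nat * nat :=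
  match t with
  | TVar i => (i, Df i i)
  | TEps => (0, 0)
  | TMeet u v => let p := sidx Df u in let q := sidx Df v in
                 (p.1, minn (minn p.2 q.2) (Df p.1 q.1))
  | TPred u => let p := sidx Df u in (p.1, p.2.-1)
  end.

Lemma sidx_ext D1 D2 t : (forall i j, D1 i j = D2 i j) -> sidx D1 t = sidx D2 t.
Proof. by move=> H; elim: t => //= [i|u IHu v IHv|u IHu]; rewrite ?IHu ?IHv ?H. Qed.

Lemma eval_take (T : eqType) (env : seq (elt T)) t :
  let p := sidx (D env) t in
  eval_term env t = take p.2 (nth [::] env p.1) /\ p.2 <= size (nth [::] env p.1).
Proof.
elim: t => /= [i||u [IHu Hu] v [IHv Hv]|u [IHu Hu]].
- by rewrite /D lcpss take_size.
- by rewrite take0.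
- split; last by rewrite (leq_trans _ Hu) // geq_min geq_minl.
  by rewrite IHu IHv take_lcp.
- split; last by rewrite (leq_trans _ Hu) // leq_pred.
  rewrite IHu /tpred size_takel // take_takel //; exact: leq_pred.
Qed.

Lemma size_eval (T : eqType) (env : seq (elt T)) t :
  size (eval_term env t) = (sidx (D env) t).2.
Proof. by have [-> H] := eval_take env t; rewrite size_takel. Qed.

Lemma size_lcp_eval (T : eqType) (env : seq (elt T)) u v :
  size (lcp (eval_term env u) (eval_term env v)) =
  minn (minn (sidx (D env) u).2 (sidx (D env) v).2) (D env (sidx (D env) u).1 (sidx (D env) v).1).
Proof.
have [-> Hu] := eval_take env u; have [-> Hv] := eval_take env v.
rewrite take_lcp size_takel // (leq_trans _ Hu) // geq_min geq_minl //.
Qed.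

Lemma Inv_iso G (A B : eqType) xs ys : @Inv A B xs ys -> partial_iso G xs ys.
Proof.
move=> [Hsz [Hip HD]]; split=> // a _.
have E t : sidx (D xs) t = sidx (D ys) t by apply: sidx_ext.
case: a => [u v|u v|sigma u] /=.
- by rewrite !eq_lcp !size_lcp_eval !size_eval !E HD.
- by rewrite !prefix_lcp !size_lcp_eval !size_eval !E HD.
- have [-> _] := eval_take xs u; have [-> _] := eval_take ys u.
  by rewrite /proj !map_take -!/(proj _) !proj_ipat E Hip.
Qed.

Lemma nth_rcons_eq (T : Type) (x0 : T) s x n :
  nth x0 (rcons s x) n = if n == size s then x else nth x0 s n.
Proof.
rewrite nth_rcons; case: (ltngtP n (size s)) => [lt|gt|eq] //.
by rewrite nth_default // ltnW.
Qed.

Lemma exists_max (f : nat -> nat) n : exists i, forall j, j < n -> f j <= f i.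
Proof.
elim: n => [|n [i Hi]]; first by exists 0.
case: (leqP (f n) (f i)) => H.
- exists i => j; rewrite ltnS leq_eqVlt => /orP [/eqP Ej|Hj]; first by rewrite Ej.
  exact: Hi.
- exists n => j; rewrite ltnS leq_eqVlt => /orP [/eqP Ej|Hj]; first by rewrite Ej.
  exact: leq_trans (Hi j Hj) (ltnW H).
Qed.

Lemma ext (A B : eqType) (xs : seq (elt A)) (ys : seq (elt B)) (a : elt A) :
  Inv xs ys -> (forall L : seq B, size L <= size xs -> exists t, t \notin L) ->
  exists b, ipat b = ipat a /\ Inv (rcons xs a) (rcons ys b).
Proof.
move=> [Hsz [Hip HD]] Hfr.
have Hsz2 i : size (nth [::] xs i) = size (nth [::] ys i).
  by rewrite -size_ipat Hip size_ipat.
pose c i := size (lcp a (nth [::] xs i)).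
have [i0 Hi0] : exists i0, forall i, c i <= c i0.
  have [i0 H] := exists_max c (size xs); exists i0 => i.
  case: (ltnP i (size xs)) => Hi; first exact: H.
  by rewrite /c nth_default // lcps0.
set d := c i0.
set x0 := nth [::] xs i0; set y0 := nth [::] ys i0.
have := lcpP d a x0; rewrite leqnn => /esym/and3P [Hda Hdx0 /eqP Htk].
have Hdy0 : d <= size y0 by rewrite /y0 -Hsz2.
pose L := pmap (fun i => (nth (0, None) (nth [::] ys i) d).2) (iota 0 (size xs)).
have [t Ht] : exists t, t \notin L.
  by apply: Hfr; rewrite size_pmap (leq_trans (count_size _ _)) // size_iota.
pose r := [seq (p.1, if p.2 is Some _ then Some t else None) | p <- drop d a].
set b := take d y0 ++ r.
have Hipb : ipat b = ipat a.
  have E1 : ipat (take d y0) = take d (ipat a).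
    by rewrite /ipat map_take /y0 -/(ipat _) -Hip -/x0 /ipat -map_take -Htk map_take.
  have E2 : ipat r = drop d (ipat a).
    by rewrite /ipat /r -map_comp -map_drop; apply: eq_map => -[? [?|]].
  by rewrite /b /ipat map_cat -!/(ipat _) E1 E2 cat_take_drop.
have Hszb : size b = size a by rewrite -size_ipat Hipb size_ipat.
have claim j : c j = size (lcp b (nth [::] ys j)).
  set xj := nth [::] xs j; set yj := nth [::] ys j.
  have Hsj : size xj = size yj by exact: Hsz2.
  suff H n : (n <= c j) = (n <= size (lcp b yj)).
    by apply/eqP; rewrite eqn_leq -H leqnn H leqnn.
  case: (leqP n d) => Hnd.
  - have Hna : n <= size a by exact: leq_trans Hda.
    have e1 : (n <= c j) = (n <= D xs i0 j).
      rewrite /c /D lcpP -/xj -/x0 lcpP Hna (leq_trans Hnd Hdx0) /=.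
      by rewrite -(take_takel _ Hnd) Htk take_takel.
    have e2 : (n <= size (lcp b yj)) = (n <= D ys i0 j).
      rewrite /D lcpP -/yj -/y0 lcpP Hszb Hna (leq_trans Hnd Hdy0) /=.
      by rewrite /b takel_cat ?size_takel // take_takel.
    by rewrite e1 e2 HD.
  - rewrite (leqNgt n (c j)) (leq_ltn_trans (Hi0 j) Hnd).
    apply/esym/negbTE/negP => Hn.
    have := leq_trans Hnd Hn; rewrite lcpP => /and3P [Hdb Hdyj /eqP Htk1].
    have Htkd : take d b = take d yj.
      by rewrite -(take_takel b (leqnSn d)) Htk1 take_takel.
    have Hnth : nth (0, None) b d = nth (0, None) yj d.
      by rewrite -(nth_take _ (ltnSn d)) Htk1 nth_take.
    have Hby0 : take d b = take d y0.
      by rewrite /b takel_cat ?size_takel // take_takel.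
    have HdD : d <= D ys i0 j.
      by rewrite /D lcpP -/y0 -/yj Hdy0 (ltnW Hdyj) -Hby0 Htkd eqxx.
    move: HdD; rewrite -HD /D lcpP -/x0 -/xj => /and3P [_ Hdxj /eqP Htkx].
    have Hnb : nth (0, None) b d = ((nth (0, None) a d).1,
         if (nth (0, None) a d).2 is Some _ then Some t else None).
      rewrite /b nth_cat size_takel // ltnn subnn /r (nth_map (0, None)).
        by rewrite nth_drop addn0.
      by rewrite size_drop subn_gt0 -Hszb.
    have Hj : j < size xs.
      rewrite ltnNge; apply/negP => Hj.
      by move: Hdyj; rewrite /yj nth_default // -Hsz.
    case Ea : (nth (0, None) a d).2 => [v|]; rewrite Ea in Hnb.
    + move: Ht; rewrite mem_pmap; apply/negP; apply/negPn.
      apply/mapP; exists j; first by rewrite mem_iota.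
      by rewrite -/yj -Hnth Hnb.
    + have := Hip j; rewrite -/xj -/yj => Hipj.
      have := congr1 (fun s => nth (0, false) s d) Hipj; rewrite !nth_ipat -Hnth Hnb /=.
      case Exj : (nth (0, None) xj d) => [k o] /= [Ek Ho].
      have Exa : nth (0, None) xj d = nth (0, None) a d.
        by rewrite Exj Ek; case: (nth (0, None) a d) Ea => ? ? /= ->; move: Ho; case: (o) => //.
      have Hdxj' : d < size xj by rewrite Hsj.
      have : d < c j.
        rewrite /c lcpP -/xj Hsj Hdyj -Hszb Hdb.
        have Hda' : d < size a by rewrite -Hszb.
        rewrite (take_nth (0, None) Hdxj') (take_nth (0, None) Hda').
        by rewrite Exa Htk Htkx eqxx.
      by rewrite ltnNge (Hi0 j).
exists b; split=> //; split; [|split].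
- by rewrite !size_rcons Hsz.
- by move=> i; rewrite !nth_rcons_eq Hsz; case: eqP => _.
- move=> i j; rewrite /D !nth_rcons_eq -Hsz.
  case: (eqVneq i (size xs)) => [_|ni]; case: (eqVneq j (size xs)) => [_|nj] /=.
  + by rewrite !lcpss Hszb.
  + exact: claim.
  + by rewrite lcpC (lcpC (nth [::] ys i)); exact: claim.
  + exact: HD.
Qed.

Lemma fresh_fin (X : finType) (L : seq X) : size L < #|X| -> exists t, t \notin L.
Proof.
move=> HL; case: (pickP (fun t => t \notin L)) => [t Ht|H]; first by exists t.
exfalso; suff : #|X| <= size L by rewrite leqNgt HL.
apply: leq_trans (card_size L); apply: subset_leq_card; apply/subsetP => x _.
by move: (H x) => /= /negbFE.
Qed.

Lemma fresh_nat (L : seq nat) : exists t, t \notin L.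
Proof.
have Hb x : x \in L -> x <= sumn L.
  elim: L => //= y L IH; rewrite in_cons => /orP [/eqP ->|/IH H].
    exact: leq_addr.
  exact: leq_trans H (leq_addl _ _).
exists (sumn L).+1; apply/negP => /Hb; by rewrite ltnn.
Qed.

Lemma win G lam (X : finType) k (xs : seq (elt X)) (ys : seq (elt nat)) :
  Inv xs ys -> size xs + k <= #|X| -> dup_wins G lam k xs ys.
Proof.
elim: k xs ys => [|k IH] xs ys HI Hk /=; first exact: Inv_iso.
have Hsz : size xs = size ys by case: HI.
split.
- move=> a Ha.
  have [b [Hb HI']] := ext a HI (fun L _ => fresh_nat L).
  exists b; first by rewrite (in_GammaX_ipat G lam Hb).
  by apply: IH => //; rewrite size_rcons addSnnS.
- move=> b Hb.
  have Hfr : forall L : seq X, size L <= size ys -> exists t, t \notin L.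
    move=> L HL; apply: fresh_fin; rewrite -Hsz in HL.
    apply: leq_ltn_trans HL (leq_trans _ Hk); by rewrite addnS ltnS leq_addr.
  have [a [Ha HI']] := ext b (Inv_sym HI) Hfr.
  exists a; first by rewrite (in_GammaX_ipat G lam Ha).
  by apply: IH; [exact: Inv_sym | rewrite size_rcons addSnnS].
Qed.

Theorem mainTheorem5 (G : seq (seq nat)) (lam : seq nat -> bool) :
  tree_plan G lam ->
  exists N : nat -> nat,
    forall (k : nat) (X : finType),
      0 < #|X| -> N k <= #|X| -> @EF_dup_wins G lam X nat k.
Proof.
move=> _; exists (fun k => k) => k X _ Hk.
apply: win => //; split=> //; split=> [i|i j] //; rewrite /D /= ?nth_nil //.
Qed.
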